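(* Let $0<r<\frac{C_0}{2}$ where $C_0=\frac14$. Then $1-|z|^2\simeq1-|w|^2$ whenever $z,w\in\mathbb{B}_n$ and $w\in D_\psi(z,r)$, with comparability constants independent of $z,w$.
   Context: $\mathbb{B}_n$ is the open unit ball of $\mathbb{C}^n$, $\langle z,w\rangle=\sum_jz_j\overline{w_j}$. For $z\ne0$, $P_z\zeta=\frac{\langle\zeta,z\rangle}{\langle z,z\rangle}z$, $P_0=0$, $Q_z=I-P_z$, and $D_\psi(z,r)=\{w\in\mathbb{B}_n:|z-P_zw|<r(1-|z|^2)^{3/2},\ |Q_zw|<r(1-|z|^2)\}$. $A\simeq B$ means $C^{-1}B\le A\le CB$ for a positive constant $C$. *)

(* Defs.v *)
From HB Require Import structures.
From mathcomp Require Import all_boot all_order all_algebra.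
From mathcomp Require Import complex.
Set Implicit Arguments. Unset Strict Implicit. Unset Printing Implicit Defensive.
Import Order.TTheory GRing.Theory Num.Theory.
Local Open Scope ring_scope.

(* C^n is modelled as row vectors 'rV[R[i]]_n over the complex numbers
   R[i] = complex R of a real closed field R (e.g. the real numbers). *)
Section Ball.
Variables (R : rcfType) (n : nat).
Local Notation C := R[i].
Local Notation vec := 'rV[C]_n.

Definition dotc (z w : vec) : C := \sum_(j < n) z 0 j * conjc (w 0 j).

(* Euclidean norm |z| = sqrt(Re <z,z>) (note <z,z> is real and >= 0) *)
Definition normv (z : vec) : R := Num.sqrt (complex.Re (dotc z z)).

Definition Pz (z zeta : vec) : vec :=
  if z == 0 then 0 else (dotc zeta z / dotc z z) *: z.

Definition Qz (z zeta : vec) : vec := zeta - Pz z zeta.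

Definition inBall (w : vec) : bool := normv w < 1.

Definition Dpsi (z : vec) (r : R) : pred vec := fun w =>
  [&& inBall w,
      normv (z - Pz z w) < r * Num.sqrt ((1 - normv z ^+ 2) ^+ 3)
    & normv (Qz z w) < r * (1 - normv z ^+ 2)].

End Ball.

(* Main.v *)
Require Import Defs.
From HB Require Import structures.
From mathcomp Require Import all_boot all_order all_algebra.
From mathcomp Require Import complex.
From mathcomp Require Import ring lra.
Import Order.TTheory GRing.Theory Num.Theory.
Local Open Scope ring_scope.

Section Aux.
Variable R : rcfType.

Lemma quad_cs (a b c : R) : 0 <= a -> 0 <= c ->
  (forall t, 0 <= a + 2 * t * b + t ^+ 2 * c) -> b <= Num.sqrt a * Num.sqrt c.
Proof.
move=> a0 c0 H.
have [c_gt0|] := ltrP 0 c; last first.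
  move=> cle; have c00 : c = 0 by apply/le_anti; rewrite cle c0.
  rewrite c00 sqrtr0 mulr0.
  case: (lerP b 0) => // bpos.
  have := H (- (a + 1) / (2 * b)).
  have -> : 2 * (- (a + 1) / (2 * b)) * b = - (a + 1).
    by field; rewrite gt_eqF.
  rewrite c00 mulr0 addr0 => h; lra.
have := H (- b / c).
have -> : a + 2 * (- b / c) * b + (- b / c) ^+ 2 * c = a - b ^+ 2 / c.
  by field; rewrite gt_eqF.
rewrite subr_ge0 ler_pdivrMr // => hb.
rewrite -sqrtrM //.
have : `|b| <= Num.sqrt (a * c).
  rewrite -sqrtr_sqr; by apply: ler_wsqrtr.
move=> h; apply: le_trans h; exact: ler_norm.
Qed.

Lemma cs_sum (I : finType) (f1 f2 g1 g2 : I -> R) :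
  \sum_i (f1 i * g1 i + f2 i * g2 i) <=
  Num.sqrt (\sum_i (f1 i ^+ 2 + f2 i ^+ 2)) *
  Num.sqrt (\sum_i (g1 i ^+ 2 + g2 i ^+ 2)).
Proof.
apply: quad_cs.
- by apply: sumr_ge0 => i _; rewrite addr_ge0 // sqr_ge0.
- by apply: sumr_ge0 => i _; rewrite addr_ge0 // sqr_ge0.
move=> t.
have -> : \sum_i (f1 i ^+ 2 + f2 i ^+ 2) + 2 * t * \sum_i (f1 i * g1 i + f2 i * g2 i)
  + t ^+ 2 * \sum_i (g1 i ^+ 2 + g2 i ^+ 2) =
  \sum_i ((f1 i + t * g1 i) ^+ 2 + (f2 i + t * g2 i) ^+ 2).
  rewrite !mulr_sumr -!big_split /=; apply: eq_bigr => i _; ring.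
by apply: sumr_ge0 => i _; rewrite addr_ge0 // sqr_ge0.
Qed.
End Aux.

Section Vec.
Variables (R : rcfType) (n : nat).
Local Notation vec := 'rV[R[i]]_n.

Definition S2 (x : vec) : R := \sum_j (complex.Re (x 0 j) ^+ 2 + complex.Im (x 0 j) ^+ 2).

Lemma ReD (u v : R[i]) : complex.Re (u + v) = complex.Re u + complex.Re v.
Proof. by case: u; case: v. Qed.
Lemma ImD (u v : R[i]) : complex.Im (u + v) = complex.Im u + complex.Im v.
Proof. by case: u; case: v. Qed.

Lemma Re_sum (I : Type) (r : seq I) (F : I -> R[i]) :
  complex.Re (\sum_(i <- r) F i) = \sum_(i <- r) complex.Re (F i).
Proof.
elim: r => [|a r IH]; first by rewrite !big_nil.
by rewrite !big_cons ReD IH.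
Qed.

Lemma normvE (x : vec) : normv x = Num.sqrt (S2 x).
Proof.
rewrite /normv /dotc /S2 Re_sum; congr Num.sqrt; apply: eq_bigr => j _.
case: (x 0 j) => a b /=; ring.
Qed.

Lemma S2_ge0 (x : vec) : 0 <= S2 x.
Proof. by apply: sumr_ge0 => i _; rewrite addr_ge0 // sqr_ge0. Qed.

Lemma normv_ge0 (x : vec) : 0 <= normv x.
Proof. by rewrite normvE sqrtr_ge0. Qed.

Lemma normvN (x : vec) : normv (- x) = normv x.
Proof.
rewrite !normvE /S2; congr Num.sqrt; apply: eq_bigr => j _.
rewrite mxE; case: (x 0 j) => a b /=; ring.
Qed.

Lemma normvD (x y : vec) : normv (x + y) <= normv x + normv y.
Proof.
rewrite !normvE.
have e : S2 (x + y) = S2 x + 2 * \sum_j (complex.Re (x 0 j) * complex.Re (y 0 j) + complex.Im (x 0 j) * complex.Im (y 0 j)) + S2 y.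
  rewrite /S2 mulr_sumr -!big_split /=; apply: eq_bigr => j _.
  rewrite mxE ReD ImD; ring.
have cs := @cs_sum R _ (fun j => complex.Re (x 0 j)) (fun j => complex.Im (x 0 j)) (fun j => complex.Re (y 0 j)) (fun j => complex.Im (y 0 j)).
rewrite -[_ + Num.sqrt (S2 y)]ger0_norm ?addr_ge0 ?sqrtr_ge0 // -sqrtr_sqr.
apply: ler_wsqrtr; rewrite e sqrrD !sqr_sqrtr ?S2_ge0 //.
rewrite /S2 in cs *; lra.
Qed.

Lemma normvB (x y : vec) : normv (x - y) <= normv x + normv y.
Proof. by rewrite -(normvN y); apply: normvD. Qed.
End Vec.
Arguments normv_ge0 {R n}.
Arguments normvD {R n}.
Arguments normvB {R n}.

Theorem lemma2p4 (R : rcfType) (n : nat) (r : R) :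
  0 < r -> r < (1 / 4) / 2 ->
  exists K : R, 0 < K /\
    forall z w : 'rV[R[i]]_n,
      inBall z -> inBall w -> w \in Dpsi z r ->
      K^-1 * (1 - normv w ^+ 2) <= 1 - normv z ^+ 2 /\
      1 - normv z ^+ 2 <= K * (1 - normv w ^+ 2).
Proof.
move=> r0 r8; exists 3; split => // z w zB wB.
rewrite unfold_in /Dpsi => /and3P[_ h1 h2].
move: zB wB; rewrite /inBall => za wb.
have a0 := normv_ge0 z; have b0 := normv_ge0 w.
have p0 := normv_ge0 (z - Pz z w); have q0 := normv_ge0 (Qz z w).
have eb : normv w <= normv z + normv (z - Pz z w) + normv (Qz z w).
  have E : w = z - (z - Pz z w) + Qz z w.
    by rewrite /Qz subKr addrC subrK.
  rewrite {1}E; apply: le_trans (normvD _ _) _; rewrite lerD2r; exact: normvB.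
have ea : normv z <= normv w + normv (z - Pz z w) + normv (Qz z w).
  have E : z = w + (z - Pz z w) - Qz z w.
    by rewrite /Qz opprB addrAC [w + _]addrC subrK addrC subrK.
  rewrite {1}E; apply: le_trans (normvB _ _) _; rewrite lerD2r; exact: normvD.
move: h1 h2 ea eb a0 b0 p0 q0 za wb.
set a := normv z; set b := normv w; set p := normv _; set q := normv _.
move=> h1 h2 ea eb a0 b0 p0 q0 za wb.
set d := 1 - a ^+ 2.
have dE : d = 1 - a ^+ 2 by [].
have d0 : 0 < d by nra.
have d1 : d <= 1 by nra.
have sd : Num.sqrt (d ^+ 3) <= d.
  rewrite -[X in _ <= X](ger0_norm (ltW d0)) -sqrtr_sqr; apply: ler_wsqrtr.
  rewrite exprS; nra.
have hp : p < r * d.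
  apply: lt_le_trans h1 _; rewrite ler_pM2l //.
have hq : q < r * d by [].
set e := p + q.
have eE : e = p + q by [].
have e0 : 0 <= e by rewrite eE addr_ge0.
have ed : e <= d / 4 by nra.
have wb' : 0 <= 1 - b by lra.
have P1 := mulr_ge0 wb' e0.
have za' : 0 <= 1 - a by lra.
have P2 := mulr_ge0 za' e0.
have P3 : 0 <= (1/4 - e) * e by apply: mulr_ge0 => //; nra.
have P4 : 0 <= (b + e - a) * (b + e + a).
  by apply: mulr_ge0; nra.
have P5 : 0 <= (a + e - b) * (a + e + b).
  by apply: mulr_ge0; nra.
split.
  have : 1 - b ^+ 2 <= 3 * d by nra.
  move=> h; rewrite -[X in _ <= X](mulKf (x := 3)) ?pnatr_eq0 //.
  by rewrite ler_pM2l // invr_gt0.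
by nra.
Qed.
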